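(* Let $\Lambda$ be a strongly connected finite $k$-graph. Suppose $m,n\in\mathbb{N}^k$ with $m-n\in\operatorname{Per}\Lambda$ and $\mu\in\Lambda^m$. Let $p:=(m\vee n)-m$ and $q:=(m\vee n)-n$. Then \[\Lambda^{\min}(\theta_{m,n}(\mu),\mu)=\{(\alpha,\theta_{q,p}(\alpha)):\alpha\in s(\mu)\Lambda^q\}.\]
   Context: A $k$-graph is a countable category $\Lambda$ with a functor $d:\Lambda\to\mathbb{N}^k$ such that whenever $d(\lambda)=m+n$ there are unique $\mu,\nu$ with $d(\mu)=m$, $d(\nu)=n$, $\lambda=\mu\nu$. $\Lambda^n=d^{-1}(n)$, $\Lambda^0$ = vertices, $r,s$ range and source, $v\Lambda^q=\{\lambda\in\Lambda^q:r(\lambda)=v\}$. Standing convention: $\Lambda^{e_i}\neq\emptyset$ for each $i$. Finite: each $\Lambda^n$ finite; strongly connected: $v\Lambda w\neq\emptyset$ for all vertices. $\Lambda^{\min}(\mu,\nu)=\{(\alpha,\beta):\mu\alpha=\nu\beta,\ d(\mu\alpha)=d(\mu)\vee d(\nu)\}$. Infinite paths: degree-preserving functors $x:\Omega_k\to\Lambda$, $\Omega_k=\{(m,n)\in\mathbb{N}^k\times\mathbb{N}^k:m\le n\}$ with $r(m,n)=(m,m)$, $s(m,n)=(n,n)$, $(m,n)(n,p)=(m,p)$, $d(m,n)=n-m$; $\Lambda^\infty$ their set; $\sigma^n(x)(p,q)=x(n+p,n+q)$; $\lambda x$ concatenation with $(\lambda x)(0,d(\lambda))=\lambda$, $\sigma^{d(\lambda)}(\lambda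 x)=x$; $Z(\lambda)=\{x:x(0,d(\lambda))=\lambda\}$. $\operatorname{Per}\Lambda=\{m-n:\sigma^m(x)=\sigma^n(x)\ \forall x\in\Lambda^\infty\}$. For $a,b\in\mathbb{N}^k$ with $a-b\in\operatorname{Per}\Lambda$ (then $\sigma^a=\sigma^b$ on $\Lambda^\infty$) and $\mu\in\Lambda^a$, $\theta_{a,b}(\mu)$ is the unique element of $\Lambda^b$ with $\mu x=\theta_{a,b}(\mu)x$ for all $x\in Z(s(\mu))$. *)

(* Defs.v *)
From mathcomp Require Import all_boot all_order all_algebra.
Set Implicit Arguments.
Unset Strict Implicit.
Unset Printing Implicit Defensive.

Definition NK (k : nat) := {ffun 'I_k -> nat}.

Section NKops.
Variable k : nat.
Definition zerov : NK k := [ffun => 0%N].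
Definition addv (m n : NK k) : NK k := [ffun i => (m i + n i)%N].
(* truncated subtraction; only used when n <= m pointwise *)
Definition subv (m n : NK k) : NK k := [ffun i => (m i - n i)%N].
Definition joinv (m n : NK k) : NK k := [ffun i => maxn (m i) (n i)].
Definition lev (m n : NK k) : bool := [forall i, (m i <= n i)%N].
Definition unitv (i : 'I_k) : NK k := [ffun j => nat_of_bool (j == i)].
Definition diffZ (m n : NK k) : {ffun 'I_k -> int} :=
  [ffun i => ((m i)%:Z - (n i)%:Z)%R].
End NKops.

(* A k-graph: a countable category (composition given as a total function,
   whose values matter only on composable pairs) with a degree functor
   d : Lambda -> N^k satisfying the unique factorisation property. *)
Record kgraph (k : nat) := KGraph {
  Obj : Type;
  Mor : countType;
  Obj_countable : exists f : Obj -> nat, injective f;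
  rg : Mor -> Obj;
  sc : Mor -> Obj;
  idm : Obj -> Mor;
  comp : Mor -> Mor -> Mor;
  deg : Mor -> NK k;
  rg_idm : forall v, rg (idm v) = v;
  sc_idm : forall v, sc (idm v) = v;
  rg_comp : forall mu nu, sc mu = rg nu -> rg (comp mu nu) = rg mu;
  sc_comp : forall mu nu, sc mu = rg nu -> sc (comp mu nu) = sc nu;
  comp_idl : forall mu, comp (idm (rg mu)) mu = mu;
  comp_idr : forall mu, comp mu (idm (sc mu)) = mu;
  compA : forall mu nu la, sc mu = rg nu -> sc nu = rg la ->
            comp mu (comp nu la) = comp (comp mu nu) la;
  deg_idm : forall v, deg (idm v) = zerov k;
  deg_comp : forall mu nu, sc mu = rg nu -> deg (comp mu nu) = addv (deg mu) (deg nu);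
  factorisation : forall la (m n : NK k), deg la = addv m n ->
     exists mu nu, [/\ deg mu = m, deg nu = n, sc mu = rg nu & la = comp mu nu] /\
       forall mu' nu', deg mu' = m -> deg nu' = n -> sc mu' = rg nu' ->
          la = comp mu' nu' -> mu' = mu /\ nu' = nu
}.

Arguments rg {k L} _ : rename.
Arguments sc {k L} _ : rename.
Arguments idm {k L} _ : rename.
Arguments comp {k L} _ _ : rename.
Arguments deg {k L} _ : rename.

Section KGraphNotions.
Variables (k : nat) (L : kgraph k).

Definition kg_finite : Prop :=
  forall n : NK k, exists s : seq (Mor L), forall la, deg la = n -> la \in s.

Definition strongly_connected : Prop :=
  forall v w : Obj L, exists la : Mor L, rg la = v /\ sc la = w.

(* standing convention: Lambda^{e_i} nonempty *)
Definition edges_nonempty : Prop :=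
  forall i : 'I_k, exists la : Mor L, deg la = unitv i.

(* Infinite paths: degree-preserving functors Omega_k -> Lambda, given by
   their values x m n = x(m,n) on morphisms (m,n), m <= n (values off this
   domain are irrelevant). The object m is sent to the vertex rg (x m m). *)
Definition is_infpath (x : NK k -> NK k -> Mor L) : Prop :=
  [/\ (forall m, x m m = idm (rg (x m m))),
      (forall m n, lev m n -> rg (x m n) = rg (x m m) /\ sc (x m n) = rg (x n n)),
      (forall m n p, lev m n -> lev n p -> x m p = comp (x m n) (x n p)) &
      (forall m n, lev m n -> deg (x m n) = subv n m)].

Definition path_eq (x y : NK k -> NK k -> Mor L) : Prop :=
  forall m n, lev m n -> x m n = y m n.

Definition shift (a : NK k) (x : NK k -> NK k -> Mor L) :=
  fun p q => x (addv a p) (addv a q).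

Definition is_concat (la : Mor L) (x y : NK k -> NK k -> Mor L) : Prop :=
  [/\ is_infpath y, y (zerov k) (deg la) = la & path_eq (shift (deg la) y) x].

Definition inPer (a b : NK k) : Prop :=
  exists m n : NK k, diffZ m n = diffZ a b /\
    forall x, is_infpath x -> path_eq (shift m x) (shift n x).

Definition is_theta (a b : NK k) (mu nu : Mor L) : Prop :=
  [/\ deg mu = a, deg nu = b &
      forall x, is_infpath x -> x (zerov k) (zerov k) = idm (sc mu) ->
        forall y, is_concat mu x y <-> is_concat nu x y].

Definition in_Lmin (mu nu al be : Mor L) : Prop :=
  [/\ sc mu = rg al, sc nu = rg be, comp mu al = comp nu be &
      deg (comp mu al) = joinv (deg mu) (deg nu)].

End KGraphNotions.

(* Main.v *)
Require Import Defs.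
From mathcomp Require Import all_boot all_order all_algebra.
From mathcomp Require Import zify.
From Stdlib Require Import ClassicalEpsilon.
Set Implicit Arguments.
Unset Strict Implicit.

Section S.
Variables (k : nat) (L : kgraph k).
Local Notation cmp := (@Defs.comp k L).
Local Notation z := (zerov k).
Local Notation addv := (@Defs.addv k).
Local Notation subv := (@Defs.subv k).
Local Notation lev := (@Defs.lev k).
Local Notation joinv := (@Defs.joinv k).
Implicit Types (la mu nu : Mor L) (a b : NK k).

Lemma levP a b : reflect (forall i, (a i <= b i)%N) (lev a b).
Proof. exact: (iffP forallP). Qed.

Ltac unf := rewrite /Defs.addv /Defs.subv /Defs.zerov /Defs.joinv ?ffunE.
Ltac gen := repeat match goal with |- context [@fun_of_fin ?T ?F ?P ?f ?i] =>
   let t := fresh "t" in set t := @fun_of_fin T F P f i; clearbody t end.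
Ltac nk := apply/ffunP => i; unf; gen; lia.

Lemma addvA a b c : addv a (addv b c) = addv (addv a b) c. Proof. nk. Qed.
Lemma addv0 a : addv a z = a. Proof. nk. Qed.
Lemma addKv a b : subv (addv a b) a = b. Proof. nk. Qed.
Lemma subvv a : subv a a = z. Proof. nk. Qed.
Lemma levD a b : lev a (addv a b). Proof. apply/levP=> i; unf; gen; lia. Qed.
Lemma lev0 a : lev z a. Proof. apply/levP=> i; unf; gen; lia. Qed.
Lemma levv a : lev a a. Proof. by apply/levP. Qed.
Lemma lev_trans a b c : lev a b -> lev b c -> lev a c.
Proof. move=> /levP h1 /levP h2; apply/levP=> i; exact: leq_trans (h1 i) (h2 i). Qed.
Lemma levDD d a b : lev a b -> lev (addv d a) (addv d b).
Proof. move=> /levP h; apply/levP=> i; unf; have := h i; gen; lia. Qed.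
Lemma subvK a b : lev a b -> addv a (subv b a) = b.
Proof. move=> /levP h; apply/ffunP=> i; unf; have := h i; gen; lia. Qed.
Lemma addv_inj a b c : addv a b = addv a c -> b = c.
Proof. move=> h; apply/ffunP=> i; have := congr1 (fun f : NK k => f i) h; unf; gen; lia. Qed.

Lemma fact_uniq mu nu mu' nu' : sc mu = rg nu -> sc mu' = rg nu' ->
  deg mu = deg mu' -> cmp mu nu = cmp mu' nu' -> mu = mu' /\ nu = nu'.
Proof.
move=> h1 h2 hd he.
have hdeg : deg nu = deg nu'.
  apply: (@addv_inj (deg mu)); rewrite -(deg_comp h1) he (deg_comp h2) hd //.
case: (factorisation (deg_comp h1)) => m1 [n1 [_ U]].
case: (U mu nu) => // -> ->.
by case: (U mu' nu') => // ->.
Qed.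

Lemma deg0_id la : deg la = z -> la = idm (rg la).
Proof.
move=> h.
have h' : deg la = addv z z by rewrite h; nk.
case: (factorisation h') => m1 [n1 [_ U]].
have e1 : la = cmp (idm (rg la)) la by rewrite comp_idl.
have e2 : la = cmp la (idm (sc la)) by rewrite comp_idr.
case: (U _ _ (deg_idm _) h (sc_idm _) e1) => -> _.
by case: (U _ _ h (deg_idm _) (esym (rg_idm _)) e2) => ->.
Qed.

Definition seg la a : Mor L * Mor L := epsilon (inhabits (la, la))
  (fun pr => [/\ deg pr.1 = a, sc pr.1 = rg pr.2 & la = cmp pr.1 pr.2]).

Lemma seg_spec la a : lev a (deg la) ->
  [/\ deg (seg la a).1 = a, sc (seg la a).1 = rg (seg la a).2 & la = cmp (seg la a).1 (seg la a).2].
Proof.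
move=> h; rewrite /seg.
apply: (epsilon_spec (inhabits (la, la)) (fun pr => [/\ deg pr.1 = a, sc pr.1 = rg pr.2 & la = cmp pr.1 pr.2])).
have h' : deg la = addv a (subv (deg la) a) by rewrite subvK.
case: (factorisation h') => m1 [n1 [[d1 _ s1 e1] _]].
by exists (m1, n1).
Qed.

Lemma seg_eq la mu nu : sc mu = rg nu -> la = cmp mu nu -> seg la (deg mu) = (mu, nu).
Proof.
move=> h e.
have hl : lev (deg mu) (deg la) by rewrite e (deg_comp h) levD.
case: (seg_spec hl) => d1 s1 e1.
case: (fact_uniq s1 h d1); first by rewrite -e1.
by case: (seg la (deg mu)) => /= ? ? -> ->.
Qed.

Definition init la a := (seg la a).1.

Lemma init_full la a : deg la = a -> init la a = la.
Proof.
move=> <-; rewrite /init (@seg_eq la la (idm (sc la))) ?rg_idm ?comp_idr //.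
Qed.

Lemma rg_init la a : lev a (deg la) -> rg (init la a) = rg la.
Proof. move=> h; case: (seg_spec h) => _ s e; by rewrite {2}e (rg_comp s). Qed.

Lemma init0 la : init la z = idm (rg la).
Proof.
have h := lev0 (deg la).
case: (seg_spec h) => d _ _.
by rewrite /init (deg0_id d) -/(init la z) rg_init.
Qed.


Lemma ip_src (x : NK k -> NK k -> Mor L) m n p : is_infpath x -> lev m n -> lev n p -> sc (x m n) = rg (x n p).
Proof.
case=> _ h2 _ _ l1 l2; by rewrite (proj2 (h2 _ _ l1)) (proj1 (h2 _ _ l2)).
Qed.

Lemma path_of_family (G : NK k -> Mor L) (HG1 : forall N, deg (G N) = N)
  (HG2 : forall N N', lev N N' -> exists r, sc (G N) = rg r /\ G N' = cmp (G N) r) :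
  exists x, is_infpath x /\ forall N, x z N = G N.
Proof.
pose x := fun m n => (seg (G n) m).2.
have key : forall m n, lev m n -> sc (G m) = rg (x m n) /\ G n = cmp (G m) (x m n).
  move=> m n lmn; case: (HG2 _ _ lmn) => r [h1 h2].
  have E : seg (G n) m = (G m, r).
    by move: (seg_eq h1 (erefl (cmp (G m) r))); rewrite HG1 -h2.
  by rewrite /x E /=.
have kdeg : forall m n, lev m n -> deg (x m n) = subv n m.
  move=> m n lmn; case: (key _ _ lmn) => h1 h2.
  apply: (@addv_inj m); rewrite subvK //.
  have := deg_comp h1; rewrite -h2 !HG1 => <- //.
have ksc : forall m n, lev m n -> sc (x m n) = sc (G n).
  move=> m n lmn; case: (key _ _ lmn) => h1 h2; by rewrite -(sc_comp h1) -h2.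
have krg : forall m n, lev m n -> rg (x m n) = sc (G m).
  by move=> m n lmn; case: (key _ _ lmn).
exists x; split; first split.
- move=> m; apply: deg0_id; rewrite kdeg ?levv // subvv //.
- move=> m n lmn; rewrite !krg ?levv // ksc // krg ?levv //.
- move=> m n p l1 l2.
  have l3 := lev_trans l1 l2.
  case: (key _ _ l3) => a1 a2; case: (key _ _ l1) => b1 b2; case: (key _ _ l2) => c1 c2.
  have s1 : sc (x m n) = rg (x n p) by rewrite ksc // -c1.
  have : cmp (G m) (x m p) = cmp (G m) (cmp (x m n) (x n p)).
    by rewrite -a2 c2 b2 (Defs.compA b1 s1).
  case/fact_uniq => //; by rewrite (rg_comp s1).
- exact: kdeg.
- move=> N; case: (key _ _ (lev0 N)) => h1 h2.
  have e0 := deg0_id (HG1 z).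
  have : sc (G z) = rg (G z) by rewrite {1}e0 sc_idm.
  rewrite h1 => e1.
  by rewrite h2 e0 -e1 comp_idl.
Qed.

Lemma path_of_chain (c : NK k -> Mor L) (Hc1 : forall N, lev N (deg (c N)))
  (Hc2 : forall A A', lev A A' -> exists r, sc (c A) = rg r /\ c A' = cmp (c A) r) :
  exists x, is_infpath x /\ forall N, x z N = init (c N) N.
Proof.
apply: path_of_family.
  by move=> N; case: (seg_spec (Hc1 N)).
move=> N N' l.
case: (Hc2 _ _ l) => r0 [hr1 hr2].
case: (seg_spec (Hc1 N)) => dN sN eN.
case: (seg_spec (Hc1 N')) => dN' sN' eN'.
have lt : lev N (deg (seg (c N') N').1) by rewrite dN'.
case: (seg_spec lt) => dt st et.
set t := seg _ N in dt st et.
exists t.2; rewrite /init.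
have s2 : sc t.2 = rg (seg (c N') N').2 by rewrite -(sc_comp st) -et.
have s3 : sc (seg (c N) N).2 = rg r0 by rewrite -(sc_comp sN) -eN.
have : cmp t.1 (cmp t.2 (seg (c N') N').2) = cmp (seg (c N) N).1 (cmp (seg (c N) N).2 r0).
  by rewrite (Defs.compA st s2) -et -eN' hr2 {1}eN (Defs.compA sN s3).
case/fact_uniq; rewrite ?(rg_comp s2) ?(rg_comp s3) ?dt ?dN // => e1 _.
by rewrite -e1 {1}et.
Qed.


Lemma subv0 a : subv a z = a. Proof. nk. Qed.
Lemma levDl a b : lev b (addv a b). Proof. apply/levP=> i; unf; gen; lia. Qed.

Definition onesv : NK k := [ffun => 1%N].

Section Paths.
Hypothesis He : edges_nonempty L.
Hypothesis Hs : strongly_connected L.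

Lemma big_path w : exists la, rg la = w /\ lev onesv (deg la).
Proof.
suff: forall j w, exists la : Mor L, rg la = w /\ forall i : 'I_k, (i < j)%N -> (0 < deg la i)%N.
  move/(_ k w) => [la [h1 h2]]; exists la; split => //; apply/levP => i; rewrite ffunE; exact: h2.
elim=> [|j IH] w0.
  by exists (idm w0); split; [exact: rg_idm|].
case: (IH w0) => la [h1 h2].
case: (ltnP j k) => hj; last first.
  exists la; split => // i _; apply: h2; exact: leq_trans (ltn_ord i) hj.
case: (He (Ordinal hj)) => lam hlam.
case: (Hs (sc la) (rg lam)) => rho [r1 r2].
have s1 : sc rho = rg lam by [].
have s2 : sc la = rg (cmp rho lam) by rewrite (rg_comp s1).
exists (cmp la (cmp rho lam)); split; first by rewrite (rg_comp s2).
move=> i hi; rewrite (deg_comp s2) (deg_comp s1) hlam.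
have := h2 i; rewrite /Defs.addv /Defs.unitv !ffunE.
move=> H; case: (boolP (i < j)%N) => hij.
  move: (H hij); gen; lia.
have -> : i == Ordinal hj by apply/eqP/val_inj => /=; move: hij hi; lia.
gen; lia.
Qed.

Definition ext (w : Obj L) : Mor L := epsilon (inhabits (idm w))
  (fun la => rg la = w /\ lev onesv (deg la)).

Lemma ext_spec w : rg (ext w) = w /\ lev onesv (deg (ext w)).
Proof.
exact: (epsilon_spec (inhabits (idm w)) (fun la => rg la = w /\ lev onesv (deg la)) (big_path w)).
Qed.

Fixpoint gp (v : Obj L) (j : nat) : Mor L :=
  if j is j'.+1 then cmp (gp v j') (ext (sc (gp v j'))) else idm v.

Lemma gp_sc v j : sc (gp v j) = rg (ext (sc (gp v j))).
Proof. by rewrite (proj1 (ext_spec _)). Qed.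

Lemma gp_rg v j : rg (gp v j) = v.
Proof. elim: j => [|j IH] /=; first exact: rg_idm. by rewrite (rg_comp (gp_sc v j)). Qed.

Lemma gp_deg v j i : (j <= deg (gp v j) i)%N.
Proof.
elim: j => [|j IH] //=.
rewrite (deg_comp (gp_sc v j)) /Defs.addv ffunE.
have := (elimT (levP _ _) (proj2 (ext_spec (sc (gp v j))))) i; rewrite /onesv ffunE.
move: IH; gen; lia.
Qed.

Lemma gp_chain v j j' : (j <= j')%N -> exists r, sc (gp v j) = rg r /\ gp v j' = cmp (gp v j) r.
Proof.
move=> /subnK <-; elim: (j' - j)%N => [|t [r [h1 h2]]].
  by exists (idm (sc (gp v j))); rewrite rg_idm add0n comp_idr.
have s : sc r = rg (ext (sc (gp v (t + j)))) by rewrite -(sc_comp h1) -h2; exact: gp_sc.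
exists (cmp r (ext (sc (gp v (t + j))))); split; first by rewrite (rg_comp s).
by rewrite addSn /= {1}h2 (Defs.compA h1 s) -h2.
Qed.

Lemma exists_path v : exists x : NK k -> NK k -> Mor L, is_infpath x /\ x z z = idm v.
Proof.
case: (@path_of_chain (fun A => gp v (\sum_(i < k) A i))) => [N | A A' l | x [hx1 hx2]].
- apply/levP => i; apply: leq_trans (gp_deg _ _ i); by rewrite (bigD1 i) //= leq_addr.
- apply: gp_chain; apply: leq_sum => i _; exact: (elimT (levP _ _) l i).
- by exists x; split => //; rewrite hx2 init0 gp_rg.
Qed.

End Paths.

Lemma concat_exists la x : is_infpath x -> x z z = idm (sc la) -> exists y, is_concat la x y.
Proof.
move=> hx h0; set d := deg la.
have rgx : forall A, sc la = rg (x z A).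
  move=> A; case: hx => _ h2 _ _; by rewrite (proj1 (h2 _ _ (lev0 A))) h0 rg_idm.
have degx : forall A, deg (x z A) = A by move=> A; case: hx => _ _ _ h4; rewrite h4 ?lev0 ?subv0.
pose c := fun N => cmp la (x z (subv N d)).
have degc : forall N, deg (c N) = addv d (subv N d).
  by move=> N; rewrite /c (deg_comp (rgx _)) degx.
case: (@path_of_chain c) => [N | A A' l | y [hy1 hy2]].
- rewrite degc; apply/levP => i; unf; gen; lia.
- have l' : lev (subv A d) (subv A' d).
    by move/levP: l => l; apply/levP => i; unf; have := l i; gen; lia.
  case: (hx) => _ _ h3 _.
  exists (x (subv A d) (subv A' d)); split.
  + rewrite /c (sc_comp (rgx _)); exact: ip_src hx (lev0 _) l'.
  + by rewrite /c (h3 _ _ _ (lev0 _) l') (Defs.compA (rgx _) (ip_src hx (lev0 _) l')).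
- have yfull : forall b, y z (addv d b) = cmp la (x z b).
    move=> b; rewrite hy2 /c addKv init_full // (deg_comp (rgx _)) degx //.
  exists y; split => //.
  + by have := yfull z; rewrite addv0 h0 comp_idr.
  + move=> a b lab; rewrite /shift.
    have l1 : lev z (addv d a) := lev0 _.
    have l2 := levDD d lab.
    case: (hy1) => _ _ h3 _; case: (hx) => _ _ hx3 _.
    have E : cmp (y z (addv d a)) (y (addv d a) (addv d b)) = cmp (y z (addv d a)) (x a b).
      by rewrite -(h3 _ _ _ l1 l2) !yfull (hx3 _ _ _ (lev0 a) lab)
         (Defs.compA (rgx _) (ip_src hx (lev0 _) lab)).
    have s2 : sc (y z (addv d a)) = rg (x a b).
      by rewrite yfull (sc_comp (rgx _)); exact: ip_src hx (lev0 _) lab.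
    by case: (fact_uniq (ip_src hy1 l1 l2) s2 (erefl _) E).
Qed.

Lemma concat_src la x y : is_concat la x y -> x z z = idm (sc la).
Proof.
case=> hy h0 hs.
have := hs z z (levv z); rewrite /shift addv0 => <-.
case: (hy) => h1 _ _ _.
have e : sc la = rg (y (deg la) (deg la)).
  by rewrite -{1}h0 (ip_src hy (lev0 _) (levv _)).
by rewrite {1}h1 e.
Qed.

Lemma concat_rg la x y : is_concat la x y -> y z z = idm (rg la).
Proof.
case=> hy h0 _; case: (hy) => h1 h2 _ _.
by rewrite {1}h1 -(proj1 (h2 _ _ (lev0 (deg la)))) h0.
Qed.

Lemma concat_assoc mu la x y w : sc mu = rg la -> is_concat la x y -> is_concat mu y w ->
  is_concat (cmp mu la) x w.
Proof.
move=> s [hy ya ys] [hw wa ws]; split => //.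
- rewrite (deg_comp s); case: (hw) => _ _ h3 _.
  rewrite (h3 _ (deg mu)) ?lev0 ?levD // wa.
  by have := ws z (deg la) (lev0 _); rewrite /shift addv0 => ->; rewrite ya.
- move=> a b lab; rewrite /shift (deg_comp s) -!addvA.
  have := ws _ _ (levDD (deg la) lab); rewrite /shift => ->.
  exact: ys.
Qed.

Lemma ip_init (y y' : NK k -> NK k -> Mor L) c a b : is_infpath y -> is_infpath y' ->
  y z c = y' z c -> lev a b -> lev b c -> y a b = y' a b.
Proof.
move=> hy hy' e lab lbc.
case: (hy) => _ _ h3 h4; case: (hy') => _ _ h3' h4'.
have e1 : y z b = y' z b.
  move: e; rewrite (h3 _ _ _ (lev0 b) lbc) (h3' _ _ _ (lev0 b) lbc) => E.
  case: (fact_uniq (ip_src hy (lev0 b) lbc) (ip_src hy' (lev0 b) lbc) _ E) => //.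
  by rewrite h4 ?h4' ?lev0.
move: e1; rewrite (h3 _ _ _ (lev0 a) lab) (h3' _ _ _ (lev0 a) lab) => E.
case: (fact_uniq (ip_src hy (lev0 a) lab) (ip_src hy' (lev0 a) lab) _ E) => //.
by rewrite h4 ?h4' ?lev0.
Qed.

Lemma concat_uniq la x y y' : is_concat la x y -> is_concat la x y' -> path_eq y y'.
Proof.
move=> [hy ya ys] [hy' ya' ys'] a b lab.
apply: (ip_init hy hy' _ lab (levDl (deg la) b)).
case: (hy) => _ _ h3 _; case: (hy') => _ _ h3' _.
have := ys z b (lev0 b); rewrite /shift addv0 => e1.
have := ys' z b (lev0 b); rewrite /shift addv0 => e1'.
by rewrite (h3 _ (deg la)) ?lev0 ?levD // (h3' _ (deg la)) ?lev0 ?levD // ya ya' e1 e1'.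
Qed.

Lemma concat_transport la x y y' : is_concat la x y -> path_eq y y' -> is_infpath y' ->
  is_concat la x y'.
Proof.
move=> [hy ya ys] e hy'; split => //.
  by rewrite -e ?lev0.
move=> a b lab; rewrite /shift -e; [exact: ys | exact: levDD].
Qed.

Section Main.
Hypothesis He : edges_nonempty L.
Hypothesis Hs : strongly_connected L.

Lemma theta_both a b la nu : is_theta a b la nu -> sc nu = sc la /\ rg nu = rg la.
Proof.
case=> _ _ H.
case: (exists_path He Hs (sc la)) => x [hx h0].
case: (concat_exists hx h0) => y hy.
have hy' := (H x hx h0 y).1 hy.
split.
  have := concat_src hy'; rewrite h0 => /(congr1 sc); rewrite !sc_idm => -> //.
have := concat_rg hy'; rewrite (concat_rg hy) => /(congr1 rg); rewrite !rg_idm => -> //.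
Qed.

Lemma main m n mu thmu : deg mu = m -> is_theta m n mu thmu -> forall al be,
  in_Lmin thmu mu al be <->
  (rg al = sc mu /\ deg al = subv (joinv m n) n /\
   is_theta (subv (joinv m n) n) (subv (joinv m n) m) al be).
Proof.
move=> Hmu Hth al be.
have scth := (theta_both Hth).1.
case: (Hth) => _ dth Hth3.
split.
- case=> s1 s2 e dj.
  have dal : deg al = subv (joinv m n) n.
    have := deg_comp s1; rewrite dj dth Hmu => h.
    apply: (@addv_inj n); rewrite -h; nk.
  have dbe : deg be = subv (joinv m n) m.
    have := deg_comp s2; rewrite -e dj dth Hmu => h.
    apply: (@addv_inj m); rewrite -h; nk.
  have ss : sc al = sc be by rewrite -(sc_comp s1) e (sc_comp s2).
  split; first by rewrite -s1 scth.
  split => //; split => // x hx h0.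
  have h0' : x z z = idm (sc be) by rewrite -ss.
  case: (concat_exists hx h0) => y1 hy1.
  case: (concat_exists hx h0') => y2 hy2.
  have hy1p : is_infpath y1 by case: hy1.
  have hy2p : is_infpath y2 by case: hy2.
  have y10 : y1 z z = idm (sc mu) by rewrite (concat_rg hy1) -s1 scth.
  have y20 : y2 z z = idm (sc mu) by rewrite (concat_rg hy2) -s2.
  case: (concat_exists hy1p y10) => w1 hw1.
  case: (concat_exists hy2p y20) => w2 hw2.
  have hw1' := (Hth3 y1 hy1p y10 w1).1 hw1.
  have A1 := concat_assoc s1 hy1 hw1'.
  have A2 := concat_assoc s2 hy2 hw2.
  rewrite e in A1.
  have ew := concat_uniq A1 A2.
  have e12 : path_eq y1 y2.
    move=> a b lab.
    case: hw1 => _ _ t1; case: hw2 => _ _ t2.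
    by rewrite -(t1 _ _ lab) -(t2 _ _ lab) /shift ew // levDD.
  move=> y; split => hy.
  + have hyp : is_infpath y by case: hy.
    apply: (concat_transport hy2) => // a b lab.
    by rewrite -(e12 _ _ lab) (concat_uniq hy1 hy).
  + have hyp : is_infpath y by case: hy.
    apply: (concat_transport hy1) => // a b lab.
    by rewrite (e12 _ _ lab) (concat_uniq hy2 hy).
- case=> r1 [dal Hab].
  case: (theta_both Hab) => sab rab.
  have s1 : sc thmu = rg al by rewrite scth r1.
  have s2 : sc mu = rg be by rewrite rab r1.
  case: (Hab) => _ dbe Hab3.
  have dj1 : deg (cmp thmu al) = joinv m n by rewrite (deg_comp s1) dth dal; nk.
  have dj2 : deg (cmp mu be) = joinv m n by rewrite (deg_comp s2) Hmu dbe; nk.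
  split => //; last by rewrite dj1 dth Hmu; nk.
  case: (exists_path He Hs (sc al)) => x [hx h0].
  case: (concat_exists hx h0) => y hy.
  have hy' := (Hab3 x hx h0 y).1 hy.
  have y0 : y z z = idm (sc mu) by rewrite (concat_rg hy) r1.
  have hyp : is_infpath y by case: hy.
  case: (concat_exists hyp y0) => w hw.
  have hw' := (Hth3 y hyp y0 w).1 hw.
  case: (concat_assoc s1 hy hw') => _ a1 _.
  case: (concat_assoc s2 hy' hw) => _ a2 _.
  by rewrite -a1 -a2 dj1 dj2.
Qed.

End Main.
End S.

Theorem corollary5p3 (k : nat) (L : kgraph k)
  (Hedges : edges_nonempty L) (Hfin : kg_finite L) (Hsc : strongly_connected L)
  (m n : NK k) (Hper : inPer L m n) (mu : Mor L) (Hmu : deg mu = m)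
  (thmu : Mor L) (Hth : is_theta m n mu thmu) :
  let p := subv (joinv m n) m in
  let q := subv (joinv m n) n in
  forall al be : Mor L,
    in_Lmin thmu mu al be <->
    (rg al = sc mu /\ deg al = q /\ is_theta q p al be).
Proof.
move=> p q al be; exact: (main Hedges Hsc Hmu Hth al be).
Qed.
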